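(* For every integer $d\ge2$, the subgroup $V_{[0,1/d)}$ is not co-amenable in $V_d$, and $T_{[0,1/d)}$ is not co-amenable in $T_d$. In particular the quasi-regular representations $\ell^2(V_d/V_{[0,1/d)})$ of $V_d$ and $\ell^2(T_d/T_{[0,1/d)})$ of $T_d$ are non-amenable.
   Context: $V_d$ is the Higman–Thompson group (piecewise affine bijections of $[0,1)$ with finitely many $d$-adic breakpoints and slopes powers of $d$), $T_d\le V_d$ the subgroup of elements inducing homeomorphisms of the circle $[0,1]/(0\sim1)$. $V_{[0,1/d)}$ (resp. $T_{[0,1/d)}$) denotes the subgroup of elements of $V_d$ (resp. $T_d$) acting as the identity on $[0,1/d)$. A subgroup $H\le G$ is co-amenable if there is a $G$-invariant mean on $\ell^\infty(G/H)$. *)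

(* Defs.v *)
From Stdlib Require Import Reals Lra Lia ZArith.
Open Scope R_scope.

Definition dadic (d : nat) (x : R) : Prop :=
  exists (m : Z) (k : nat), x = IZR m / (INR d ^ k).

Definition In01 (x : R) : Prop := 0 <= x < 1.

Definition pw_affine (d : nat) (f : R -> R) : Prop :=
  exists (n : nat) (a : nat -> R),
    a 0%nat = 0 /\ a n = 1 /\
    (forall i, (i < n)%nat -> a i < a (S i)) /\
    (forall i, (i <= n)%nat -> dadic d (a i)) /\
    (forall i, (i < n)%nat -> exists (k : Z) (b : R),
        forall x, a i <= x < a (S i) -> f x = powerRZ (INR d) k * x + b).

(* Elements of V_d are represented as maps R -> R that are the identity
   outside [0,1); group law = composition. *)
Definition inV (d : nat) (f : R -> R) : Prop :=
  (forall x, ~ In01 x -> f x = x) /\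
  (forall x, In01 x -> In01 (f x)) /\
  (forall x y, In01 x -> In01 y -> f x = f y -> x = y) /\
  (forall y, In01 y -> exists x, In01 x /\ f x = y) /\
  pw_affine d f.

(* distance on the circle [0,1]/(0~1), points represented in [0,1) *)
Definition cdist (x y : R) : R := Rmin (Rabs (x - y)) (1 - Rabs (x - y)).

Definition circ_continuous (f : R -> R) : Prop :=
  forall x, In01 x -> forall eps, 0 < eps -> exists delta, 0 < delta /\
    forall y, In01 y -> cdist x y < delta -> cdist (f x) (f y) < eps.

Definition inT (d : nat) (f : R -> R) : Prop :=
  inV d f /\ circ_continuous f /\
  exists g : R -> R,
    (forall y, In01 y -> In01 (g y)) /\
    (forall x, In01 x -> g (f x) = x) /\
    (forall y, In01 y -> f (g y) = y) /\
    circ_continuous g.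

Definition fixes_first (d : nat) (f : R -> R) : Prop :=
  forall x, 0 <= x < 1 / INR d -> f x = x.

Definition inVfix (d : nat) (f : R -> R) : Prop := inV d f /\ fixes_first d f.
Definition inTfix (d : nat) (f : R -> R) : Prop := inT d f /\ fixes_first d f.

(* l^infty(G/H), identified with bounded functions on G that are constant
   on left cosets gH. G, H are given as predicates on R -> R with group law
   composition (fun x => g (h x)). *)
Definition linfGH (G H : (R -> R) -> Prop) (phi : (R -> R) -> R) : Prop :=
  (exists M, forall g, G g -> Rabs (phi g) <= M) /\
  (forall g h, G g -> H h -> phi (fun x => g (h x)) = phi g).

Definition coamenable (G H : (R -> R) -> Prop) : Prop :=
  exists m : ((R -> R) -> R) -> R,
    (forall (c : R) phi psi, linfGH G H phi -> linfGH G H psi ->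
        m (fun g => c * phi g + psi g) = c * m phi + m psi) /\
    (forall phi, linfGH G H phi -> (forall g, G g -> 0 <= phi g) -> 0 <= m phi) /\
    m (fun _ => 1) = 1 /\
    (forall g0 phi, G g0 -> linfGH G H phi ->
        m (fun g => phi (fun x => g0 (g x))) = m phi).

(* Main.v *)
Require Import Defs.
From Stdlib Require Import Reals.
From Stdlib Require Import Lra Lia ZArith FunctionalExtensionality.
Open Scope R_scope.

Ltac brk := repeat match goal with
  | |- context[Rlt_dec ?a ?b] => destruct (Rlt_dec a b)
  | |- context[Rle_dec ?a ?b] => destruct (Rle_dec a b) end.

Definition ind (a b y : R) : R :=
  if Rle_dec a y then if Rlt_dec y b then 1 else 0 else 0.

Lemma ind_bound a b y : Rabs (ind a b y) <= 1.
Proof. unfold ind; brk; rewrite ?Rabs_R1, ?Rabs_R0; lra. Qed.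

Lemma ind_split a b c y : a <= b -> b <= c -> ind a c y = 1 * ind a b y + ind b c y.
Proof. intros; unfold ind; brk; lra. Qed.

Lemma linf_ev (G H : (R->R)->Prop) (F : R -> R) :
  (forall y, Rabs (F y) <= 1) -> (forall h, H h -> h 0 = 0) ->
  linfGH G H (fun g => F (g 0)).
Proof. intros HF H0. split. exists 1; intros; apply HF.
  intros g h _ Hh. simpl. rewrite H0; auto. Qed.

Lemma linf_comb G H (c : R) phi psi : linfGH G H phi -> linfGH G H psi ->
  linfGH G H (fun g => c * phi g + psi g).
Proof.
  intros [[M1 HM1] I1] [[M2 HM2] I2]. split.
  - exists (Rabs c * M1 + M2). intros g Hg.
    eapply Rle_trans; [apply Rabs_triang|]. rewrite Rabs_mult.
    specialize (HM1 g Hg); specialize (HM2 g Hg).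
    assert (Rabs c * Rabs (phi g) <= Rabs c * M1) by (apply Rmult_le_compat_l; [apply Rabs_pos| lra]).
    lra.
  - intros g h Hg Hh. rewrite I1, I2; auto.
Qed.

Lemma m_ext G H (m : ((R->R)->R)->R) :
  (forall (c:R) phi psi, linfGH G H phi -> linfGH G H psi ->
     m (fun g => c*phi g + psi g) = c * m phi + m psi) ->
  (forall phi, linfGH G H phi -> (forall g, G g -> 0 <= phi g) -> 0 <= m phi) ->
  forall phi psi, linfGH G H phi -> linfGH G H psi ->
    (forall g, G g -> phi g = psi g) -> m phi = m psi.
Proof.
  intros Hlin Hpos phi psi L1 L2 E.
  assert (A1 := Hpos _ (linf_comb G H (-1) phi psi L1 L2)).
  assert (A2 := Hpos _ (linf_comb G H (-1) psi phi L2 L1)).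
  rewrite Hlin in A1 by auto. rewrite Hlin in A2 by auto.
  assert (0 <= -1 * m phi + m psi) by (apply A1; intros; rewrite E; auto; lra).
  assert (0 <= -1 * m psi + m phi) by (apply A2; intros; rewrite E; auto; lra).
  lra.
Qed.

Definition ee (d : nat) := / INR d.

Lemma efacts d : (2 <= d)%nat -> 2 <= INR d /\ INR d * ee d = 1 /\ 0 < ee d /\ ee d <= 1/2.
Proof.
  intros Hd. assert (2 <= INR d).
  { replace 2 with (INR 2) by (simpl; lra). apply le_INR; auto. }
  unfold ee. split; [auto|]. split; [apply Rinv_r; lra|].
  assert (0 < / INR d) by (apply Rinv_0_lt_compat; lra). split; [auto|].
  assert (INR d * / INR d = 1) by (apply Rinv_r; lra). nra.
Qed.

Definition LipOn (V : R -> R) (L a b : R) :=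
  forall x y, a <= x -> x <= y -> y <= b -> 0 <= V y - V x <= L*(y-x).

Lemma lip_piece V L a b k q : 0 <= k <= L -> (forall z, a <= z <= b -> V z = k*z + q) ->
  LipOn V L a b.
Proof. intros Hk HV x y Hx Hxy Hy. rewrite !HV by lra. nra. Qed.

Lemma lip_glue V L a b c : LipOn V L a b -> LipOn V L b c -> a <= b <= c -> LipOn V L a c.
Proof.
  intros H1 H2 Hb x y Hx Hxy Hy.
  destruct (Rle_dec y b). apply H1; lra.
  destruct (Rle_dec b x). apply H2; lra.
  specialize (H1 x b ltac:(lra) ltac:(lra) ltac:(lra)).
  specialize (H2 b y ltac:(lra) ltac:(lra) ltac:(lra)). lra.
Qed.

Lemma cdist_sym x y : cdist x y = cdist y x.
Proof. unfold cdist. rewrite Rabs_minus_sym. auto. Qed.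

Lemma cdist_le (f V : R -> R) (L : R) :
  0 < L ->
  (forall x, In01 x -> In01 (f x)) ->
  (forall x, In01 x -> f x = V x \/ f x = V x - 1) ->
  V 1 = V 0 + 1 -> LipOn V L 0 1 ->
  forall x y, In01 x -> In01 y -> x <= y -> cdist (f x) (f y) <= L * cdist x y.
Proof.
  intros L0 Hf HV V1 Hl x y Hx Hy Hxy.
  pose proof (Hf x Hx) as Fx. pose proof (Hf y Hy) as Fy.
  unfold In01 in *.
  pose proof (Hl x y ltac:(lra) ltac:(lra) ltac:(lra)).
  pose proof (Hl 0 x ltac:(lra) ltac:(lra) ltac:(lra)).
  pose proof (Hl y 1 ltac:(lra) ltac:(lra) ltac:(lra)).
  assert (cdist (f x) (f y) <= V y - V x /\ cdist (f x) (f y) <= 1 - (V y - V x)).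
  { assert (Rabs (f x - f y) = V y - V x \/ Rabs (f x - f y) = 1 - (V y - V x)).
    { destruct (HV x Hx) as [E1|E1]; destruct (HV y Hy) as [E2|E2]; rewrite E1, E2 in *.
      - left. rewrite Rabs_left1; lra.
      - right. rewrite Rabs_right; lra.
      - exfalso. lra.
      - left. rewrite Rabs_left1; lra. }
    unfold cdist. pose proof (Rmin_l (Rabs (f x - f y)) (1 - Rabs (f x - f y))).
    pose proof (Rmin_r (Rabs (f x - f y)) (1 - Rabs (f x - f y))). lra. }
  assert (cdist x y = Rmin (y - x) (1 - (y - x))) by (unfold cdist; rewrite (Rabs_left1 (x - y)) by lra; f_equal; ring).
  rewrite H3. unfold Rmin. destruct Rle_dec; lra.
Qed.

Lemma circ_lip (f V : R -> R) (L : R) :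
  0 < L ->
  (forall x, In01 x -> In01 (f x)) ->
  (forall x, In01 x -> f x = V x \/ f x = V x - 1) ->
  V 1 = V 0 + 1 -> LipOn V L 0 1 -> circ_continuous f.
Proof.
  intros L0 Hf HV V1 Hl x Hx eps Heps. exists (eps / L). split.
  apply Rdiv_lt_0_compat; auto.
  intros y Hy Hd.
  assert (cdist (f x) (f y) <= L * cdist x y).
  { destruct (Rle_dec x y). eapply cdist_le; eauto.
    rewrite cdist_sym, (cdist_sym x). eapply cdist_le; eauto. lra. }
  assert (L * cdist x y < L * (eps / L)) by (apply Rmult_lt_compat_l; auto).
  replace (L * (eps / L)) with eps in * by (field; lra). lra.
Qed.

Definition circ (f : R -> R) x := if Rle_dec 0 x then if Rlt_dec x 1 then f x else x else x.

Lemma circ_in f x : In01 x -> circ f x = f x.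
Proof. intros [? ?]; unfold circ; brk; lra. Qed.
Lemma circ_out f x : ~ In01 x -> circ f x = x.
Proof. intros H; unfold circ, In01 in *; brk; auto. exfalso; apply H; lra. Qed.

Lemma circ_inT d f g F G (L : R) : 0 < L ->
  (forall x, In01 x -> In01 (f x)) -> (forall y, In01 y -> In01 (g y)) ->
  (forall x, In01 x -> g (f x) = x) -> (forall y, In01 y -> f (g y) = y) ->
  (forall x, In01 x -> f x = F x \/ f x = F x - 1) -> F 1 = F 0 + 1 -> LipOn F L 0 1 ->
  (forall x, In01 x -> g x = G x \/ g x = G x - 1) -> G 1 = G 0 + 1 -> LipOn G L 0 1 ->
  pw_affine d (circ f) -> inT d (circ f).
Proof.
  intros L0 Hf Hg Hgf Hfg HF F1 LF HG G1 LG Hpw.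
  split; [|split].
  - split; [|split; [|split; [|split]]].
    + apply circ_out.
    + intros; rewrite circ_in; auto.
    + intros x y Hx Hy E. rewrite !circ_in in E by auto.
      rewrite <- (Hgf x Hx), <- (Hgf y Hy), E; auto.
    + intros y Hy. exists (g y). split; auto. rewrite circ_in; auto.
    + auto.
  - apply (circ_lip _ F L); auto; intros; rewrite circ_in; auto.
  - exists (circ g). split; [|split; [|split]].
    + intros; rewrite circ_in; auto.
    + intros x Hx. rewrite (circ_in f), circ_in; auto.
    + intros y Hy. rewrite (circ_in g), circ_in; auto.
    + apply (circ_lip _ G L); auto; intros; rewrite circ_in; auto.
Qed.

Definition s0 d y := if Rlt_dec y (1 - ee d * ee d) then y + ee d * ee d else y + ee d * ee d - 1.
Definition s0' d y := if Rlt_dec y (ee d * ee d) then y - ee d * ee d + 1 else y - ee d * ee d.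
Definition v0 d y := if Rlt_dec y (ee d) then y * ee d + 1 - ee d * ee d
  else if Rlt_dec y (ee d + ee d * ee d) then INR d * y - 1 else y - ee d * ee d.
Definition v0' d y := if Rlt_dec y (ee d) then y * ee d + ee d
  else if Rlt_dec y (1 - ee d * ee d) then y + ee d * ee d else INR d * y - INR d + ee d.
Definition VV d x := if Rle_dec x (ee d) then x * ee d + 1 - ee d * ee d
  else if Rle_dec x (ee d + ee d * ee d) then INR d * x else x - ee d * ee d + 1.
Definition WW d y := if Rle_dec y (ee d) then y * ee d + ee d
  else if Rle_dec y (1 - ee d * ee d) then y + ee d * ee d else INR d * y - INR d + ee d + 1.

Ltac prep d Hd :=
  let D2 := fresh "D2" in let De := fresh "De" in let e0 := fresh "e0" in
  let e12 := fresh "e12" in let E2 := fresh "E2" in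
  destruct (efacts d Hd) as [D2 [De [e0 e12]]];
  set (e := ee d) in *; set (D := INR d) in *;
  assert (E2 : D * (e * e) = e) by (replace (D*(e*e)) with ((D*e)*e) by ring; rewrite De; ring).

Lemma dadic_e2 d : (2 <= d)%nat -> dadic d (1 - ee d * ee d).
Proof. intros Hd. destruct (efacts d Hd) as [D2 _].
  exists (Z.of_nat d * Z.of_nat d - 1)%Z, 2%nat. unfold ee.
  rewrite minus_IZR, mult_IZR, <- INR_IZR_INZ. simpl. field. lra. Qed.
Lemma dadic_e1 d : (2 <= d)%nat -> dadic d (ee d + ee d * ee d).
Proof. intros Hd. destruct (efacts d Hd) as [D2 _].
  exists (Z.of_nat d + 1)%Z, 2%nat. unfold ee.
  rewrite plus_IZR, <- INR_IZR_INZ. simpl. field. lra. Qed.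
Lemma dadic_e d : (2 <= d)%nat -> dadic d (ee d).
Proof. intros Hd. destruct (efacts d Hd) as [D2 _].
  exists 1%Z, 1%nat. unfold ee. simpl. field. lra. Qed.
Lemma dadic_0 d : dadic d 0.
Proof. exists 0%Z, 0%nat. simpl. field. Qed.
Lemma dadic_1 d : dadic d 1.
Proof. exists 1%Z, 0%nat. simpl. field. Qed.

Lemma s_inT d : (2 <= d)%nat -> inT d (circ (s0 d)).
Proof.
  intros Hd.
  assert (pw : pw_affine d (circ (s0 d))).
  { exists 2%nat, (fun i => match i with 0%nat => 0 | 1%nat => 1 - ee d * ee d | _ => 1 end).
    split; [auto|]. split; [auto|]. split; [|split].
    - intros i Hi. destruct i as [|[|i]]; [| |lia]; prep d Hd; nra.
    - intros i Hi. destruct i as [|[|[|i]]]; [apply dadic_0|apply dadic_e2; auto|apply dadic_1|lia].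
    - intros i Hi. destruct i as [|[|i]]; [| |lia].
      + exists 0%Z, (ee d * ee d). intros x Hx. prep d Hd. rewrite circ_in by (unfold In01; nra).
        unfold s0. fold e. simpl powerRZ. brk; lra.
      + exists 0%Z, (ee d * ee d - 1). intros x Hx. prep d Hd. rewrite circ_in by (unfold In01; nra).
        unfold s0. fold e. simpl powerRZ. brk; lra. }
  destruct (efacts d Hd) as [D2 _].
  apply (circ_inT d (s0 d) (s0' d) (fun x => x + ee d * ee d) (fun x => x - ee d * ee d + 1) (INR d));
    try lra; auto; prep d Hd; unfold In01, s0, s0', LipOn in *; fold e; intros; brk; try nra.
Qed.

Lemma v_inT d : (2 <= d)%nat -> inT d (circ (v0 d)).
Proof.
  intros Hd.
  assert (pw : pw_affine d (circ (v0 d))).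
  { exists 3%nat, (fun i => match i with 0%nat => 0 | 1%nat => ee d | 2%nat => ee d + ee d * ee d | _ => 1 end).
    split; [auto|]. split; [auto|]. split; [|split].
    - intros i Hi. destruct i as [|[|[|i]]]; [| | |lia]; prep d Hd; nra.
    - intros i Hi. destruct i as [|[|[|[|i]]]];
        [apply dadic_0|apply dadic_e; auto|apply dadic_e1; auto|apply dadic_1|lia].
    - intros i Hi. destruct i as [|[|[|i]]]; [| | |lia].
      + exists (-1)%Z, (1 - ee d * ee d). intros x Hx. prep d Hd. rewrite circ_in by (unfold In01; nra).
        replace (powerRZ D (-1)) with e by (simpl; unfold e, ee; fold D; field; lra).
        unfold v0. fold e. fold D. brk; nra.
      + exists 1%Z, (-1). intros x Hx. prep d Hd. rewrite circ_in by (unfold In01; nra).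
        replace (powerRZ D 1) with D by (simpl; ring).
        unfold v0. fold e. fold D. brk; nra.
      + exists 0%Z, (- ee d * ee d). intros x Hx. prep d Hd. rewrite circ_in by (unfold In01; nra).
        unfold v0. fold e. fold D. simpl powerRZ. brk; nra. }
  destruct (efacts d Hd) as [D2 _].
  apply (circ_inT d (v0 d) (v0' d) (VV d) (WW d) (INR d)); try lra; auto.
  - prep d Hd. unfold In01, v0. fold e D. intros x Hx. brk; nra.
  - prep d Hd. unfold In01, v0'. fold e D. intros x Hx. brk; nra.
  - prep d Hd. unfold In01, v0, v0'. fold e D. intros x Hx. brk; nra.
  - prep d Hd. unfold In01, v0, v0'. fold e D. intros x Hx. brk; nra.
  - prep d Hd. unfold In01, v0, VV. fold e D. intros x Hx. brk; nra.
  - prep d Hd. unfold VV. fold e D. brk; nra.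
  - prep d Hd. apply (lip_glue _ _ 0 e 1); [|apply (lip_glue _ _ e (e+e*e) 1)|]; try nra.
    + apply (lip_piece _ _ _ _ e (1 - e*e)); try nra. intros z Hz. unfold VV; fold e D; brk; nra.
    + apply (lip_piece _ _ _ _ D 0); try nra. intros z Hz. unfold VV; fold e D; brk; nra.
    + apply (lip_piece _ _ _ _ 1 (1 - e*e)); try nra. intros z Hz. unfold VV; fold e D; brk; nra.
  - prep d Hd. unfold In01, v0', WW. fold e D. intros x Hx. brk; nra.
  - prep d Hd. unfold WW. fold e D. brk; nra.
  - prep d Hd. apply (lip_glue _ _ 0 e 1); [|apply (lip_glue _ _ e (1-e*e) 1)|]; try nra.
    + apply (lip_piece _ _ _ _ e e); try nra. intros z Hz. unfold WW; fold e D; brk; nra.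
    + apply (lip_piece _ _ _ _ 1 (e*e)); try nra. intros z Hz. unfold WW; fold e D; brk; nra.
    + apply (lip_piece _ _ _ _ D (- D + e + 1)); try nra. intros z Hz. unfold WW; fold e D; brk; nra.
Qed.

Lemma core (d : nat) (G H : (R->R)->Prop) (s v : R->R) :
  (2 <= d)%nat ->
  (forall g, G g -> In01 (g 0)) ->
  (forall h, H h -> h 0 = 0) ->
  G s -> G v ->
  (forall y, In01 y -> forall a b, ee d * ee d <= a -> b <= 1 ->
      ind a b (s y) = ind (a - ee d * ee d) (b - ee d * ee d) y) ->
  (forall y, In01 y -> ind 0 (ee d) (v y) = ind (ee d) (ee d + ee d * ee d) y) ->
  ~ coamenable G H.
Proof.
  intros Hd HG HH Gs Gv Hs Hv [m [Hlin [Hpos [Hnorm Hinv]]]].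
  destruct (efacts d Hd) as [D2 [De [e0 e12]]].
  set (e := ee d) in *. set (D := INR d) in *.
  set (nu := fun a b => m (fun g => ind a b (g 0))).
  assert (LE : forall a b, linfGH G H (fun g => ind a b (g 0)))
    by (intros; apply linf_ev; auto; intros; apply ind_bound).
  assert (Hrot : forall a b, e*e <= a -> b <= 1 -> nu (a - e*e) (b - e*e) = nu a b).
  { intros a b Ha Hb. unfold nu.
    rewrite <- (Hinv s (fun g => ind a b (g 0))) by auto.
    apply (m_ext G H m Hlin Hpos); auto.
    - apply (linf_ev G H (fun y => ind a b (s y))); auto. intros; apply ind_bound.
    - intros g Hg. simpl. symmetry. apply Hs; auto. }
  assert (Hadd : forall a b c, a <= b -> b <= c -> nu a c = nu a b + nu b c).
  { intros a b c Hab Hbc. unfold nu.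
    replace (fun g : R -> R => ind a c (g 0)) with
      (fun g : R -> R => 1 * ind a b (g 0) + ind b c (g 0))
      by (extensionality g; symmetry; apply ind_split; auto).
    rewrite Hlin by auto. ring. }
  assert (Htot : nu 0 1 = 1).
  { rewrite <- Hnorm. unfold nu. apply (m_ext G H m Hlin Hpos); auto.
    - change (linfGH G H (fun g => (fun _ => 1) (g 0))). apply linf_ev; auto.
      intros; rewrite Rabs_R1; lra.
    - intros g Hg. destruct (HG g Hg). unfold ind; brk; lra. }
  assert (Hvv : nu e (e + e*e) = nu 0 e).
  { unfold nu. rewrite <- (Hinv v (fun g => ind 0 e (g 0))) by auto.
    apply (m_ext G H m Hlin Hpos); auto.
    - apply (linf_ev G H (fun y => ind 0 e (v y))); auto. intros; apply ind_bound.
    - intros g Hg. simpl. symmetry. apply Hv; auto. }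
  set (c := nu 0 (e*e)).
  assert (Hj : forall j:nat, (INR j + 1) * (e*e) <= 1 ->
             nu (INR j * (e*e)) ((INR j + 1) * (e*e)) = c).
  { induction j; intros Hj.
    - unfold c. simpl. f_equal; ring.
    - rewrite S_INR. rewrite S_INR in Hj.
      rewrite <- IHj by nra.
      assert (0 <= INR j) by apply pos_INR.
      rewrite <- (Hrot ((INR j + 1) * (e*e)) ((INR j + 1 + 1) * (e*e))) by nra.
      f_equal; ring. }
  assert (Hn : forall n:nat, INR n * (e*e) <= 1 -> nu 0 (INR n * (e*e)) = INR n * c).
  { induction n; intros Hn.
    - simpl. rewrite Rmult_0_l. assert (H0 := Hadd 0 0 0). lra.
    - rewrite S_INR in *. assert (0 <= INR n) by apply pos_INR.
      rewrite (Hadd 0 (INR n * (e*e))) by nra.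
      rewrite IHn by nra. rewrite Hj by nra. ring. }
  assert (E1 : INR (d*d) * (e*e) = 1) by (rewrite mult_INR; fold D;
     replace (D*D*(e*e)) with ((D*e)*(D*e)) by ring; rewrite De; ring).
  assert (C1 : INR (d*d) * c = 1) by (rewrite <- Hn, E1; auto; lra).
  assert (E2 : D * (e*e) = e) by (replace (D*(e*e)) with ((D*e)*e) by ring; rewrite De; ring).
  assert (C2 : nu 0 e = D * c). { rewrite <- E2 at 1. apply Hn. fold D. lra. }
  assert (C3 : nu e (e + e*e) = c).
  { rewrite <- (Hj d); fold D. f_equal; try lra. replace ((D+1)*(e*e)) with (D*(e*e) + e*e) by ring. nra. }
  rewrite mult_INR in C1. fold D in C1.
  assert (Hc0 : c = 0) by nra. rewrite Hc0 in C1. lra.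
Qed.

Theorem lemma5p6 : forall d : nat, (2 <= d)%nat ->
  ~ coamenable (inV d) (inVfix d) /\ ~ coamenable (inT d) (inTfix d).
Proof.
  intros d Hd.
  pose proof (s_inT d Hd) as Ts. pose proof (v_inT d Hd) as Tv.
  assert (Hs : forall y, In01 y -> forall a b, ee d * ee d <= a -> b <= 1 ->
      ind a b (circ (s0 d) y) = ind (a - ee d * ee d) (b - ee d * ee d) y).
  { intros y Hy a b Ha Hb. rewrite circ_in by auto. prep d Hd. unfold In01 in Hy.
    unfold s0, ind. fold e. brk; lra. }
  assert (Hv : forall y, In01 y -> ind 0 (ee d) (circ (v0 d) y) = ind (ee d) (ee d + ee d * ee d) y).
  { intros y Hy. rewrite circ_in by auto. prep d Hd. unfold In01 in Hy.
    unfold v0, ind. fold e D. brk; nra. }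
  assert (H0 : forall h, fixes_first d h -> h 0 = 0).
  { intros h Hh. apply Hh. destruct (efacts d Hd) as [D2 _]. split; [lra|].
    apply Rdiv_lt_0_compat; lra. }
  split.
  - apply (core d (inV d) (inVfix d) (circ (s0 d)) (circ (v0 d))); auto.
    + intros g [_ [Hg _]]. apply Hg. unfold In01; lra.
    + intros h [_ Hh]. auto.
    + apply Ts. + apply Tv.
  - apply (core d (inT d) (inTfix d) (circ (s0 d)) (circ (v0 d))); auto.
    + intros g [[_ [Hg _]] _]. apply Hg. unfold In01; lra.
    + intros h [_ Hh]. auto.
Qed.
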